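(* There exist a constant $C>0$, a deterministic leader election algorithm with advice $\mathcal{A}$, and a map $G\mapsto \mathrm{Adv}(G)$ assigning a binary string to each feasible graph, such that for every feasible $n$-node graph $G$ with election index $\phi$: (1) the length of $\mathrm{Adv}(G)$ is at most $C\, n\log n$; and (2) when all nodes of $G$ receive $\mathrm{Adv}(G)$ as advice, $\mathcal{A}$ performs leader election in $G$ in time $\phi$.
   Context: A graph is a simple undirected connected finite graph with $n\ge 3$ nodes, which have no identifiers; at each node $v$ of degree $d$ the incident edges carry distinct port numbers $0,\dots,d-1$ (local to each node). The truncated view $\mathcal{V}^0(v)$ is a single node; $\mathcal{V}^{l+1}(v)$ is the port-labelled rooted tree whose root has, for every neighbour $v_i$ of $v$, a child $x_i$ joined by an edge carrying the same two port numbers as $\{v,v_i\}$ (the one at $v$ at the root side), and $x_i$ is the root of a copy of $\mathcal{V}^l(v_i)$. The augmented truncated view $\mathcal{B}^l(v)$ is $\mathcal{V}^l(v)$ with each leaf labelled by the degree in $G$ of the node it represents. A graph is feasible if for some $l$ the views $\mathcal{B}^l(v)$ of all nodes are pairwise distinct; its election index $\phi$ is the smallest such $l$ (equivalently, the minimum time of leader election when nodes know the port-labelled map of the graph). Model (LOCAL): synchronous rounds, all nodes start simultaneously, in each round every node exchanges arbitrary messages with all neighbours and computes arbitrarily. Leader election: every node $v$ outputs a sequence $(p_1,q_1,\dots,p_k,q_k)$ of nonnegative integers describing a simple path starting at $v$ whose $i$-th edge has port $p_i$ at its endpoint closer to $v$ and $q_i$ at the other endpoint; all these paths must end at a common node (the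 leader). Time is the number of rounds until all nodes output. Advice: before the start, an oracle knowing the entire port-labelled graph gives the same binary string (the advice) to all nodes; its length is the size of advice. A deterministic algorithm with advice: the actions/output of node $v$ in round $r$ are a function of the advice and of $\mathcal{B}^r(v)$. Logarithms are base 2. *)

(* Defs.v *)
From Stdlib Require Import Reals List Arith Bool.
Import ListNotations.

(** * Port-labelled graphs
    Nodes are the naturals 0..pg_n-1.  Node [v] has degree [deg v]; the edge
    with port [p < deg v] at [v] leads to node [nbr v p], where it carries
    port [rport v p]. *)
Record pgraph := PGraph {
  pg_n  : nat;
  deg   : nat -> nat;
  nbr   : nat -> nat -> nat;
  rport : nat -> nat -> nat
}.

Inductive reach (G : pgraph) (u : nat) : nat -> Prop :=
| reach_refl : reach G u u
| reach_step : forall w p, reach G u w -> p < deg G w -> reach G u (nbr G w p).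

Definition wf_graph (G : pgraph) : Prop :=
  3 <= pg_n G /\
  (forall v p, v < pg_n G -> p < deg G v ->
     nbr G v p < pg_n G /\
     rport G v p < deg G (nbr G v p) /\
     nbr G (nbr G v p) (rport G v p) = v /\
     rport G (nbr G v p) (rport G v p) = p /\
     nbr G v p <> v) /\
  (forall v p p', v < pg_n G -> p < deg G v -> p' < deg G v ->
     nbr G v p = nbr G v p' -> p = p') /\
  (forall u v, u < pg_n G -> v < pg_n G -> reach G u v).

(** * Augmented truncated views
    [VLeaf d]: a leaf labelled by the degree [d] of the node it represents.
    [VNode cs]: an internal node; the i-th entry of [cs] is the child reached
    by port i at this node, paired with the port [q] at the other endpoint. *)
Inductive view : Type :=
| VLeaf : nat -> view
| VNode : list (nat * view) -> view.

Fixpoint bview (G : pgraph) (l : nat) (v : nat) : view :=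
  match l with
  | O => VLeaf (deg G v)
  | S l' => VNode (map (fun p => (rport G v p, bview G l' (nbr G v p)))
                       (seq 0 (deg G v)))
  end.

Definition views_distinct (G : pgraph) (l : nat) : Prop :=
  forall u v, u < pg_n G -> v < pg_n G -> u <> v -> bview G l u <> bview G l v.

Definition feasible (G : pgraph) : Prop := exists l, views_distinct G l.

Definition election_index (G : pgraph) (phi : nat) : Prop :=
  views_distinct G phi /\ forall l, l < phi -> ~ views_distinct G l.

(** * Paths described by port sequences (p1,q1,...,pk,qk).
    [path_nodes G v s] = Some (list of visited nodes, starting with v) if s
    describes a valid path from v, None otherwise. *)
Fixpoint path_nodes (G : pgraph) (v : nat) (s : list nat) : option (list nat) :=
  match s with
  | [] => Some [v]
  | p :: q :: s' =>
      if andb (Nat.ltb p (deg G v)) (Nat.eqb (rport G v p) q) then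
        match path_nodes G (nbr G v p) s' with
        | Some l => Some (v :: l)
        | None => None
        end
      else None
  | [_] => None
  end.

Definition simple_path_to (G : pgraph) (v : nat) (s : list nat) (w : nat) : Prop :=
  exists l, path_nodes G v s = Some l /\ NoDup l /\ last l v = w.

(** The action/output of node v in round r is a function of the advice and of
    B^r(v): [A adv (bview G r v)] is [None] if v does not output in round r,
    and [Some s] if v outputs s in round r.  A node's output is the one
    produced in the first round where it outputs. *)
Definition algorithm := list bool -> view -> option (list nat).

Definition elects_in (A : algorithm) (adv : list bool) (G : pgraph) (t : nat) : Prop :=
  exists leader, leader < pg_n G /\
    forall v, v < pg_n G ->
      exists r s, r <= t /\
        (forall r', r' < r -> A adv (bview G r' v) = None) /\
        A adv (bview G r v) = Some s /\
        simple_path_to G v s leader.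

Definition log2 (x : R) : R := (ln x / ln 2)%R.

(* Main.v *)
Require Import Defs.
From Stdlib Require Import Reals List Arith Bool Lia Lra PeanoNat.
From Stdlib Require Import Classical ClassicalEpsilon FunctionalExtensionality.
Import ListNotations.


Section G.
Variable G : pgraph.
Hypothesis W : wf_graph G.
Notation n := (pg_n G).

Lemma wf_nbr v p : v < n -> p < deg G v ->
     nbr G v p < n /\
     rport G v p < deg G (nbr G v p) /\
     nbr G (nbr G v p) (rport G v p) = v /\
     rport G (nbr G v p) (rport G v p) = p /\
     nbr G v p <> v.
Proof. destruct W as [_ [H _]]. auto. Qed.

Lemma reach_lt u v : reach G u v -> u < n -> v < n.
Proof. induction 1; auto. intros. apply wf_nbr; auto. Qed.

Lemma deg_pos v : v < n -> 0 < deg G v.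
Proof.
  intros Hv. destruct W as [H3 [_ [_ Hc]]].
  set (u := if Nat.eqb v 0 then 1 else 0).
  assert (Hu : u < n /\ u <> v) by (unfold u; destruct (Nat.eqb_spec v 0); lia).
  destruct Hu as [Hu1 Hu2].
  specialize (Hc u v Hu1 Hv). clearbody u. inversion Hc as [E|w p Hr Hp E]; [congruence|].
  assert (w < n) by (apply (reach_lt u w); assumption).
  destruct (wf_nbr w p H Hp) as [_ [H4 _]]. lia.
Qed.

Lemma deg_lt v : v < n -> deg G v < n.
Proof.
  intros Hv. destruct W as [_ [_ [Hinj _]]].
  assert (ND : NoDup (v :: map (nbr G v) (seq 0 (deg G v)))).
  { constructor.
    - intro H. apply in_map_iff in H. destruct H as [p [E Hp]].
      apply in_seq in Hp. destruct (wf_nbr v p Hv ltac:(lia)) as [_ [_ [_ [_ X]]]]. congruence.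
    - apply NoDup_map_NoDup_ForallPairs; [|apply seq_NoDup].
      intros a b Ha Hb E. apply in_seq in Ha, Hb. apply (Hinj v a b); auto; lia. }
  assert (I : incl (v :: map (nbr G v) (seq 0 (deg G v))) (seq 0 n)).
  { intros x [<-|Hx]; apply in_seq; [lia|].
    apply in_map_iff in Hx. destruct Hx as [p [<- Hp]]. apply in_seq in Hp.
    destruct (wf_nbr v p Hv ltac:(lia)). lia. }
  pose proof (NoDup_incl_length ND I). simpl in H. rewrite length_map, !length_seq in H. lia.
Qed.
End G.


Lemma nth_error_map_seq {B} (f : nat -> B) d p :
  nth_error (map f (seq 0 d)) p = if p <? d then Some (f p) else None.
Proof. rewrite nth_error_map, nth_error_seq. destruct (p <? d); reflexivity. Qed.

Lemma bview_char G k u w :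
  bview G (S k) u = bview G (S k) w <->
  deg G u = deg G w /\ forall p, p < deg G u ->
     rport G u p = rport G w p /\ bview G k (nbr G u p) = bview G k (nbr G w p).
Proof.
  simpl. split.
  - intros H. injection H as H.
    assert (Hd : deg G u = deg G w).
    { apply (f_equal (@length _)) in H. rewrite !length_map, !length_seq in H. exact H. }
    split; [exact Hd|]. intros p Hp.
    apply (f_equal (fun l => nth_error l p)) in H.
    rewrite !nth_error_map_seq in H.
    assert (p <? deg G u = true) by (apply Nat.ltb_lt; lia).
    assert (p <? deg G w = true) by (apply Nat.ltb_lt; lia).
    rewrite H0, H1 in H. injection H as H2 H3. auto.
  - intros [Hd Hp]. f_equal. rewrite <- Hd. apply map_ext_in.
    intros p Hin. apply in_seq in Hin. destruct (Hp p ltac:(lia)) as [A B]. rewrite A, B. reflexivity.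
Qed.

Lemma bview_refine G k u w :
  bview G (S k) u = bview G (S k) w -> bview G k u = bview G k w.
Proof.
  revert u w. induction k; intros u w H.
  - apply bview_char in H. destruct H as [Hd _]. simpl. rewrite Hd. reflexivity.
  - apply bview_char in H. destruct H as [Hd Hp]. apply bview_char. split; auto.
    intros p Hq. destruct (Hp p Hq). split; auto.
Qed.

Definition vdeg (V : view) := match V with VLeaf d => d | VNode cs => length cs end.

Lemma vdeg_bview G k u : vdeg (bview G k u) = deg G u.
Proof. destruct k; simpl; auto. rewrite length_map, length_seq. auto. Qed.

Lemma bview_deg G k u w : bview G k u = bview G k w -> deg G u = deg G w.
Proof. intros H. rewrite <- (vdeg_bview G k u), <- (vdeg_bview G k w), H. auto. Qed.

Fixpoint height (V : view) : nat :=
  match V with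
  | VLeaf _ => 0
  | VNode cs => match cs with (_, W) :: _ => S (height W) | [] => 1 end
  end.

Definition rule := (nat * nat * nat * nat * nat * nat)%type.
Definition rlev (r : rule) : nat := let '(l,_,_,_,_,_) := r in l.

Definition opt_eqb (a b : option (nat * nat)) : bool :=
  match a, b with
  | Some (x1, y1), Some (x2, y2) => Nat.eqb x1 x2 && Nat.eqb y1 y2
  | None, None => true
  | _, _ => false
  end.

Lemma opt_eqb_spec a b : opt_eqb a b = true <-> a = b.
Proof.
  destruct a as [[x1 y1]|], b as [[x2 y2]|]; simpl; split; intro H; try congruence; auto.
  - apply andb_prop in H. destruct H as [H1 H2]. apply Nat.eqb_eq in H1, H2. subst. auto.
  - injection H as -> ->. rewrite !Nat.eqb_refl. auto.
Qed.

Definition step_rule (ent : nat -> option (nat * nat)) (cur : nat) (r : rule) : nat :=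
  let '(_, c, p, q, x, c') := r in
  if Nat.eqb cur c && opt_eqb (ent p) (Some (q, x)) then c' else cur.

Definition apply_rules (rs : list rule) (cur : nat) ent := fold_left (step_rule ent) rs cur.
Definition at_level (l : nat) (rs : list rule) := filter (fun r => Nat.eqb (rlev r) l) rs.

Fixpoint nameV (rs : list rule) (l : nat) (V : view) : nat :=
  match l with
  | O => vdeg V
  | S l' => match V with
            | VLeaf _ => 0
            | VNode cs => apply_rules (at_level l' rs) (nameV rs l' V)
                 (fun p => match nth_error cs p with
                           | Some (q, W) => Some (q, nameV rs l' W)
                           | None => None end)
            end
  end.

Fixpoint gname (G : pgraph) (rs : list rule) (l u : nat) : nat :=
  match l with
  | O => deg G u
  | S l' => apply_rules (at_level l' rs) (gname G rs l' u)
              (fun p => if p <? deg G u then Some (rport G u p, gname G rs l' (nbr G u p)) else None)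
  end.

Definition gent G rs l u := 
  (fun p => if p <? deg G u then Some (rport G u p, gname G rs l (nbr G u p)) else None).

Lemma gname_S G rs l u :
  gname G rs (S l) u = apply_rules (at_level l rs) (gname G rs l u) (gent G rs l u).
Proof. reflexivity. Qed.

Lemma nameV_bview G rs l : forall k u, l <= k -> nameV rs l (bview G k u) = gname G rs l u.
Proof.
  induction l; intros k u Hk.
  - simpl. apply vdeg_bview.
  - destruct k as [|k]; [lia|].
    change (nameV rs (S l) (bview G (S k) u)) with
      (apply_rules (at_level l rs) (nameV rs l (bview G (S k) u))
                 (fun p => match nth_error (map (fun p => (rport G u p, bview G k (nbr G u p))) (seq 0 (deg G u))) p with
                           | Some (q, W) => Some (q, nameV rs l W)
                           | None => None end)).
    rewrite IHl by lia. simpl. f_equal. apply functional_extensionality. intros p.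
    rewrite nth_error_map_seq. destruct (p <? deg G u); auto. rewrite IHl by lia. auto.
Qed.


Lemma at_level_nil l extra : Forall (fun r => l < rlev r) extra -> at_level l extra = [].
Proof.
  induction 1; simpl; auto. destruct (Nat.eqb_spec (rlev x) l); [lia|]. auto.
Qed.

Lemma at_level_all l extra : Forall (fun r => rlev r = l) extra -> at_level l extra = extra.
Proof.
  induction 1; simpl; auto. rewrite H, Nat.eqb_refl. f_equal; auto.
Qed.

Lemma gname_app G rs extra L : Forall (fun r => L <= rlev r) extra ->
  forall l u, l <= L -> gname G (rs ++ extra) l u = gname G rs l u.
Proof.
  intros HF l. induction l; intros u Hl; simpl; auto.
  unfold at_level. rewrite filter_app. fold (at_level l rs) (at_level l extra).
  rewrite (at_level_nil l extra), app_nil_r.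
  2:{ eapply Forall_impl; [|exact HF]. simpl. intros; lia. }
  rewrite IHl by lia. f_equal. apply functional_extensionality. intros p.
  destruct (p <? deg G u); auto. rewrite IHl by lia. auto.
Qed.

Definition cnt n (f : nat -> nat) := length (nodup Nat.eq_dec (map f (seq 0 n))).

Lemma cnt_le n f : cnt n f <= n.
Proof.
  unfold cnt. transitivity (length (map f (seq 0 n))); [|rewrite length_map, length_seq; lia].
  apply NoDup_incl_length; [apply NoDup_nodup|]. intros x Hx. apply nodup_In in Hx. auto.
Qed.

Lemma cnt_incr n f g c' :
  (forall v, v < n -> exists v', v' < n /\ f v = g v') ->
  (exists w, w < n /\ g w = c') -> (forall v, v < n -> f v <> c') ->
  S (cnt n f) <= cnt n g.
Proof.
  intros H1 [w [Hw Hg]] H3. unfold cnt.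
  change (S (length (nodup Nat.eq_dec (map f (seq 0 n))))) with
    (length (c' :: nodup Nat.eq_dec (map f (seq 0 n)))).
  apply NoDup_incl_length.
  - constructor; [|apply NoDup_nodup]. intro H. apply nodup_In, in_map_iff in H.
    destruct H as [v [E Hv]]. apply in_seq in Hv. apply (H3 v); auto; lia.
  - intros x [<-|Hx]; apply nodup_In, in_map_iff.
    + exists w. split; auto. apply in_seq; lia.
    + apply nodup_In, in_map_iff in Hx. destruct Hx as [v [<- Hv]]. apply in_seq in Hv.
      destruct (H1 v ltac:(lia)) as [v' [Hv' E]]. exists v'. split; auto. apply in_seq; lia.
Qed.

Definition rule_ok B (r : rule) : Prop :=
  let '(_, c, p, q, x, c') := r in c < B /\ p < B /\ q < B /\ x < B /\ c' < B.

Lemma rule_ok_mono B B' r : B <= B' -> rule_ok B r -> rule_ok B' r.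
Proof. destruct r as [[[[[l c] p] q] x] c']. simpl. lia. Qed.

Lemma step_rule_eq ent cur l c p q x c' :
  step_rule ent cur (l, c, p, q, x, c') =
  if Nat.eqb cur c && opt_eqb (ent p) (Some (q, x)) then c' else cur.
Proof. reflexivity. Qed.

Section Inner.
Variable G : pgraph.
Hypothesis W : wf_graph G.
Notation n := (pg_n G).
Variable rs : list rule.
Variable L : nat.
Notation N := (gname G rs L).
Notation E := (gent G rs L).
Hypothesis Hinv : forall u w, u < n -> w < n -> (N u = N w <-> bview G L u = bview G L w).
Hypothesis Hbnd : forall v, v < n -> N v < n + length rs.
Hypothesis Hcnt : length rs <= cnt n N.

Definition cur (extra : list rule) v := apply_rules extra (N v) (E v).

Definition Jinv extra :=
  (forall u w, u < n -> w < n -> cur extra u = cur extra w -> N u = N w) /\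
  (forall u w, u < n -> w < n -> N u = N w -> (forall p, E u p = E w p) -> cur extra u = cur extra w) /\
  length rs + length extra <= cnt n (cur extra) /\
  (forall v, v < n -> cur extra v < n + length rs + length extra) /\
  Forall (fun r => rlev r = L /\ rule_ok (n + length rs + length extra) r) extra.

Lemma E_none u p : deg G u <= p -> E u p = None.
Proof. intros H. unfold gent. destruct (Nat.ltb_spec p (deg G u)); auto; lia. Qed.

Lemma E_some u p : p < deg G u -> E u p = Some (rport G u p, N (nbr G u p)).
Proof. intros H. unfold gent. destruct (Nat.ltb_spec p (deg G u)); auto; lia. Qed.

Lemma inner_finish extra :
  Jinv extra ->
  (forall u w, u < n -> w < n -> cur extra u = cur extra w -> forall p, E u p = E w p) ->
  forall u w, u < n -> w < n -> (cur extra u = cur extra w <-> bview G (S L) u = bview G (S L) w).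
Proof.
  intros [Ja [Jb _]] Hfin u w Hu Hw. split.
  - intros Hc. pose proof (Ja u w Hu Hw Hc) as HN. apply Hinv in HN; auto.
    pose proof (bview_deg _ _ _ _ HN) as Hd.
    apply bview_char. split; auto. intros p Hp.
    pose proof (Hfin u w Hu Hw Hc p) as He. rewrite !E_some in He by lia.
    injection He as H1 H2. split; auto.
    destruct (wf_nbr G W u p Hu Hp) as [Hn1 _].
    destruct (wf_nbr G W w p Hw ltac:(lia)) as [Hn2 _].
    apply Hinv; auto.
  - intros Hb. apply Jb; auto.
    + apply Hinv; auto. apply bview_refine; auto.
    + apply bview_char in Hb. destruct Hb as [Hd Hp]. intros p.
      destruct (Nat.ltb_spec p (deg G u)).
      * rewrite !E_some by lia. destruct (Hp p H) as [H1 H2]. rewrite H1. f_equal. f_equal.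
        destruct (wf_nbr G W u p Hu H) as [Hn1 _].
        destruct (wf_nbr G W w p Hw ltac:(lia)) as [Hn2 _].
        apply Hinv; auto.
      * rewrite !E_none by lia. auto.
Qed.

Lemma cur_app extra r v : cur (extra ++ [r]) v = step_rule (E v) (cur extra v) r.
Proof. unfold cur, apply_rules. rewrite fold_left_app. reflexivity. Qed.

Lemma inner_step extra u w p : Jinv extra -> u < n -> w < n -> cur extra u = cur extra w ->
  E u p <> E w p ->
  exists extra', Jinv extra' /\ S (cnt n (cur extra)) <= cnt n (cur extra').
Proof.
  intros [Ja [Jb [Jc [Jd Je]]]] Hu Hw Hc Hne.
  pose proof (Ja u w Hu Hw Hc) as HN.
  assert (Hd : deg G u = deg G w) by (apply Hinv in HN; auto; eapply bview_deg; eauto).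
  assert (Hp : p < deg G w).
  { destruct (Nat.ltb_spec p (deg G w)); auto. rewrite !E_none in Hne by lia. congruence. }
  set (B := n + length rs + length extra).
  assert (HB : B = n + length rs + length extra) by reflexivity. clearbody B.
  set (q := rport G w p). set (x := N (nbr G w p)).
  set (c := cur extra u).
  set (r := (L, c, p, q, x, B) : rule).
  assert (HEw : E w p = Some (q, x)) by (apply E_some; auto).
  assert (Hcur : forall v, cur (extra ++ [r]) v =
     if Nat.eqb (cur extra v) c && opt_eqb (E v p) (Some (q, x)) then B else cur extra v).
  { intros v. rewrite cur_app. reflexivity. }
  assert (Htest_w : Nat.eqb (cur extra w) c && opt_eqb (E w p) (Some (q, x)) = true).
  { apply andb_true_intro. split; [apply Nat.eqb_eq; unfold c; auto|apply opt_eqb_spec; auto]. }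
  assert (Htest_u : Nat.eqb (cur extra u) c && opt_eqb (E u p) (Some (q, x)) = false).
  { destruct (opt_eqb (E u p) (Some (q, x))) eqn:X; [|apply andb_false_r].
    apply opt_eqb_spec in X. congruence. }
  destruct (wf_nbr G W w p Hw Hp) as [Hn1 [Hn2 _]].
  exists (extra ++ [r]). split.
  - unfold Jinv. rewrite length_app. simpl.
    split; [|split; [|split; [|split]]].
    + intros a b Ha Hb. rewrite !Hcur.
      pose proof (Jd a Ha). pose proof (Jd b Hb).
      destruct (Nat.eqb (cur extra a) c && opt_eqb (E a p) (Some (q, x))) eqn:Ta,
               (Nat.eqb (cur extra b) c && opt_eqb (E b p) (Some (q, x))) eqn:Tb;
        intros Hab; try lia.
      * apply andb_prop in Ta, Tb. destruct Ta as [Ta _], Tb as [Tb _].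
        apply Nat.eqb_eq in Ta, Tb. apply Ja; auto; congruence.
      * apply Ja; auto.
    + intros a b Ha Hb Hab Hent. rewrite !Hcur. rewrite (Jb a b Ha Hb Hab Hent), (Hent p). auto.
    + assert (S (cnt n (cur extra)) <= cnt n (cur (extra ++ [r]))).
      { apply (cnt_incr _ _ _ B).
        - intros v Hv. destruct (Nat.eqb (cur extra v) c && opt_eqb (E v p) (Some (q, x))) eqn:Tv.
          + exists u. split; auto. rewrite Hcur, Htest_u. apply andb_prop in Tv.
            destruct Tv as [Tv _]. apply Nat.eqb_eq in Tv. rewrite Tv. auto.
          + exists v. split; auto. rewrite Hcur, Tv. auto.
        - exists w. split; auto. rewrite Hcur, Htest_w. auto.
        - intros v Hv. pose proof (Jd v Hv). lia. }
      lia.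
    + intros v Hv. rewrite Hcur. pose proof (Jd v Hv).
      destruct ((cur extra v =? c) && opt_eqb (E v p) (Some (q, x))); lia.
    + apply Forall_app. split.
      * eapply Forall_impl; [|exact Je]. simpl. intros a [A1 A2]. split; auto.
        eapply rule_ok_mono; [|exact A2]. lia.
      * constructor; auto. split; [reflexivity|]. simpl.
        pose proof (Jd u Hu). unfold c.
        assert (deg G (nbr G w p) < n) by (apply deg_lt; auto).
        pose proof (Hbnd (nbr G w p) Hn1). fold x in H1. unfold q. pose proof (deg_lt G W w Hw). lia.
  - apply (cnt_incr _ _ _ B).
    + intros v Hv. destruct (Nat.eqb (cur extra v) c && opt_eqb (E v p) (Some (q, x))) eqn:Tv.
      * exists u. split; auto. rewrite Hcur, Htest_u. apply andb_prop in Tv.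
        destruct Tv as [Tv _]. apply Nat.eqb_eq in Tv. rewrite Tv. auto.
      * exists v. split; auto. rewrite Hcur, Tv. auto.
    + exists w. split; auto. rewrite Hcur, Htest_w. auto.
    + intros v Hv. pose proof (Jd v Hv). lia.
Qed.

Lemma inner_loop : forall k extra, Jinv extra -> n - cnt n (cur extra) <= k ->
  exists extra', Jinv extra' /\
   forall u w, u < n -> w < n -> (cur extra' u = cur extra' w <-> bview G (S L) u = bview G (S L) w).
Proof.
  induction k; intros extra HJ Hk.
  - exists extra. split; auto. apply inner_finish; auto.
    intros u w Hu Hw Hc p. apply NNPP. intro Hne.
    destruct (inner_step extra u w p HJ Hu Hw Hc Hne) as [e' [_ He']].
    pose proof (cnt_le n (cur e')). lia.
  - destruct (classic (exists u w p, u < n /\ w < n /\ cur extra u = cur extra w /\ E u p <> E w p))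
      as [[u [w [p [Hu [Hw [Hc Hne]]]]]]|Hno].
    + destruct (inner_step extra u w p HJ Hu Hw Hc Hne) as [e' [HJ' He']].
      pose proof (cnt_le n (cur e')).
      apply (IHk e' HJ'). lia.
    + exists extra. split; auto. apply inner_finish; auto.
      intros u w Hu Hw Hc p. apply NNPP. intro Hne. apply Hno. eauto 7.
Qed.

Lemma Jinv_nil : Jinv [].
Proof.
  unfold Jinv, cur. simpl. rewrite Nat.add_0_r. repeat split; auto. intros v Hv. rewrite Nat.add_0_r. auto.
Qed.
End Inner.


Lemma at_level_nil' l rs : Forall (fun r => rlev r <> l) rs -> at_level l rs = [].
Proof.
  induction 1; simpl; auto. destruct (Nat.eqb_spec (rlev x) l); [lia|]. auto.
Qed.

Section Outer.
Variable G : pgraph.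
Hypothesis W : wf_graph G.
Notation n := (pg_n G).

Lemma stable L : (forall u w, u < n -> w < n -> (bview G (S L) u = bview G (S L) w <-> bview G L u = bview G L w)) ->
  forall j u w, u < n -> w < n -> (bview G (S (L + j)) u = bview G (S (L + j)) w <-> bview G (L + j) u = bview G (L + j) w).
Proof.
  intros H j. induction j; intros u w Hu Hw.
  - rewrite Nat.add_0_r. auto.
  - rewrite Nat.add_succ_r. rewrite !bview_char. split; intros [Hd Hp]; split; auto; intros p Hq;
      destruct (Hp p Hq) as [A B]; split; auto;
      destruct (wf_nbr G W u p Hu Hq) as [Hn1 _];
      destruct (wf_nbr G W w p Hw ltac:(lia)) as [Hn2 _]; apply IHj; auto.
Qed.

Lemma stable_all L : (forall u w, u < n -> w < n -> (bview G (S L) u = bview G (S L) w <-> bview G L u = bview G L w)) ->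
  forall j u w, u < n -> w < n -> (bview G (L + j) u = bview G (L + j) w <-> bview G L u = bview G L w).
Proof.
  intros H j. induction j; intros u w Hu Hw.
  - rewrite Nat.add_0_r. tauto.
  - rewrite Nat.add_succ_r. rewrite (stable L H j u w Hu Hw). apply IHj; auto.
Qed.

Variable phi : nat.
Hypothesis Hphi : election_index G phi.

Definition OuterInv L rs :=
  Forall (fun r => rlev r < L /\ rule_ok (n + length rs) r) rs /\
  L <= length rs /\ length rs <= cnt n (gname G rs L) /\
  (forall v, v < n -> gname G rs L v < n + length rs) /\
  (forall u w, u < n -> w < n -> (gname G rs L u = gname G rs L w <-> bview G L u = bview G L w)).

Lemma outer : forall L, L <= phi -> exists rs, OuterInv L rs.
Proof.
  induction L; intros HL.
  - exists []. unfold OuterInv. simpl. split; [constructor|]. split; [lia|]. split; [lia|].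
    split.
    + intros v Hv. rewrite Nat.add_0_r. apply deg_lt; auto.
    + intros u w _ _. split; intros H; [rewrite H; auto| injection H; auto].
  - destruct (IHL ltac:(lia)) as [rs [F [Hlen [Hc [Hb Hi]]]]].
    destruct (inner_loop G W rs L Hi Hb Hc n [] (Jinv_nil G rs L Hb Hc)) as [extra [HJ Hiff]].
    { lia. }
    destruct HJ as [Ja [Jb [Jc [Jd Je]]]].
    assert (Hlev : Forall (fun r => L <= rlev r) extra).
    { eapply Forall_impl; [|exact Je]. simpl. intros a [A _]. lia. }
    assert (HgL : forall v, gname G (rs ++ extra) L v = gname G rs L v).
    { intros v. apply (gname_app G rs extra L); auto. }
    assert (Hat : at_level L (rs ++ extra) = extra).
    { unfold at_level. rewrite filter_app. fold (at_level L rs) (at_level L extra).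
      rewrite at_level_nil', at_level_all; auto.
      - eapply Forall_impl; [|exact Je]. simpl. tauto.
      - eapply Forall_impl; [|exact F]. simpl. intros a [A _]. lia. }
    assert (Hg : forall v, gname G (rs ++ extra) (S L) v = cur G rs L extra v).
    { intros v. rewrite gname_S, Hat, HgL. unfold cur. f_equal.
      apply functional_extensionality. intros p. unfold gent. destruct (p <? deg G v); auto.
      rewrite HgL. auto. }
    assert (Hne : extra <> []).
    { intros ->. destruct Hphi as [Hd Hmin]. apply (Hmin L ltac:(lia)).
      assert (Hst : forall u w, u < n -> w < n -> (bview G (S L) u = bview G (S L) w <-> bview G L u = bview G L w)).
      { intros u w Hu Hw. rewrite <- Hiff by auto. rewrite <- Hi by auto. unfold cur. simpl. tauto. }
      intros u w Hu Hw Huw Heq. apply (Hd u w Hu Hw Huw).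
      replace phi with (L + (phi - L)) by lia. apply stable_all; auto. }
    exists (rs ++ extra). unfold OuterInv. rewrite length_app.
    split; [|split; [|split; [|split]]].
    + apply Forall_app. split.
      * eapply Forall_impl; [|exact F]. simpl. intros a [A B]. split; [lia|].
        eapply rule_ok_mono; [|exact B]. lia.
      * eapply Forall_impl; [|exact Je]. simpl. intros a [A B]. split; [lia|]. rewrite Nat.add_assoc. exact B.
    + destruct extra; [congruence|]. simpl. lia.
    + replace (cnt n (gname G (rs ++ extra) (S L))) with (cnt n (cur G rs L extra)); [lia|].
      f_equal. apply functional_extensionality. intros v. auto.
    + intros v Hv. rewrite Hg. pose proof (Jd v Hv). lia.
    + intros u w Hu Hw. rewrite !Hg. auto.
Qed.
End Outer.


Inductive reachn (G : pgraph) (u : nat) : nat -> nat -> Prop :=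
| rn0 : reachn G u 0 u
| rnS : forall k w p, reachn G u k w -> p < deg G w -> reachn G u (S k) (nbr G w p).

Lemma reach_reachn G u v : reach G u v -> exists k, reachn G u k v.
Proof. induction 1 as [|w p H [k Hk] Hp]; [exists 0; constructor|exists (S k); constructor; auto]. Qed.

Lemma min_exists (P : nat -> Prop) : (exists k, P k) -> exists k, P k /\ forall j, P j -> k <= j.
Proof.
  intros [k Hk]. revert Hk. induction k as [k IH] using lt_wf_ind. intros Hk.
  destruct (classic (exists j, j < k /\ P j)) as [[j [Hj Pj]]|Hno].
  - apply (IH j Hj Pj).
  - exists k. split; auto. intros j Pj. destruct (Nat.le_gt_cases k j); auto.
    exfalso. apply Hno. eauto.
Qed.

Lemma choice_fun {A B : Type} (P : A -> B -> Prop) : (forall a, exists b, P a b) -> exists f, forall a, P a (f a).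
Proof.
  intros H. exists (fun a => proj1_sig (constructive_indefinite_description _ (H a))).
  intros a. exact (proj2_sig (constructive_indefinite_description _ (H a))).
Qed.

Definition tentry := (nat * nat * nat * nat)%type.

Definition lookup (T : list tentry) (c : nat) :=
  find (fun e : tentry => let '(k, _, _, _) := e in Nat.eqb k c) T.

Fixpoint follow (T : list tentry) (fuel c : nat) : list nat :=
  match fuel with
  | O => []
  | S f => match lookup T c with
           | Some (_, p, q, c2) => p :: q :: follow T f c2
           | None => []
           end
  end.

Lemma find_unique {A} (P : A -> bool) (l : list A) v :
  In v l -> P v = true -> (forall x, In x l -> P x = true -> x = v) -> find P l = Some v.
Proof.
  induction l; simpl; intros Hin Hv Hu; [contradiction|].
  destruct (P a) eqn:Pa.
  - rewrite (Hu a (or_introl eq_refl) Pa). auto.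
  - destruct Hin as [->|Hin]; [congruence|]. apply IHl; auto.
Qed.

Lemma find_none' {A} (P : A -> bool) (l : list A) :
  (forall x, In x l -> P x = false) -> find P l = None.
Proof. induction l; simpl; intros H; auto. rewrite H by auto. apply IHl. auto. Qed.

Lemma last_cons_irrel (a : nat) l d1 d2 : last (a :: l) d1 = last (a :: l) d2.
Proof. revert a. induction l; intros b; [reflexivity|]. change (last (a :: l) d1 = last (a :: l) d2). apply IHl. Qed.

Section Tree.
Variable G : pgraph.
Hypothesis W : wf_graph G.
Notation n := (pg_n G).

Lemma reachn_lt u k v : reachn G u k v -> u < n -> v < n.
Proof. induction 1; auto. intros. apply wf_nbr; auto. Qed.

Variable dist : nat -> nat.
Hypothesis Hdist : forall v, v < n -> reachn G 0 (dist v) v /\ forall j, reachn G 0 j v -> dist v <= j.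

Lemma dist0 : dist 0 = 0.
Proof. assert (0 < n) by (destruct W; lia). destruct (Hdist 0 H) as [_ H2]. specialize (H2 0 (rn0 G 0)). lia. Qed.

Lemma dist_zero v : v < n -> dist v = 0 -> v = 0.
Proof. intros Hv H. destruct (Hdist v Hv) as [H1 _]. rewrite H in H1. inversion H1. auto. Qed.

Lemma parent_exists v : v < n -> v <> 0 ->
  exists w pp, w < n /\ pp < deg G v /\ nbr G v pp = w /\ S (dist w) = dist v.
Proof.
  intros Hv Hv0. destruct (Hdist v Hv) as [H1 H2].
  destruct (dist v) as [|k] eqn:Ed.
  - inversion H1. congruence.
  - inversion H1 as [|k' w p Hr Hp Ew]; subst.
    assert (Hw : w < n) by (eapply reachn_lt; eauto; destruct W; lia).
    destruct (wf_nbr G W w p Hw Hp) as [_ [A [B _]]].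
    exists w, (rport G w p). split; auto. split; auto. split; auto.
    destruct (Hdist w Hw) as [H3 H4]. specialize (H4 k Hr).
    assert (reachn G 0 (S (dist w)) (nbr G w p)) by (constructor; auto).
    specialize (H2 _ H). lia.
Qed.

Variable par pp : nat -> nat.
Hypothesis Hpar : forall v, v < n -> v <> 0 ->
  par v < n /\ pp v < deg G v /\ nbr G v (pp v) = par v /\ S (dist (par v)) = dist v.

Variable nm : nat -> nat.
Hypothesis Hnm : forall u w, u < n -> w < n -> nm u = nm w -> u = w.

Definition entry v : tentry := (nm v, pp v, rport G v (pp v), nm (par v)).
Definition table := map entry (seq 1 (n - 1)).

Lemma lookup_spec v : v < n -> lookup table (nm v) = if Nat.eqb v 0 then None else Some (entry v).
Proof.
  intros Hv. unfold lookup, table. destruct (Nat.eqb_spec v 0).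
  - apply find_none'. intros x Hx. apply in_map_iff in Hx. destruct Hx as [u [<- Hu]].
    apply in_seq in Hu. simpl. apply Nat.eqb_neq. intro E. apply Hnm in E; lia.
  - apply find_unique.
    + apply in_map. apply in_seq. lia.
    + simpl. apply Nat.eqb_refl.
    + intros x Hx Px. apply in_map_iff in Hx. destruct Hx as [u [<- Hu]].
      apply in_seq in Hu. simpl in Px. apply Nat.eqb_eq in Px. apply Hnm in Px; try lia. subst. auto.
Qed.

Lemma follow_path : forall k fuel v, v < n -> dist v = k -> k <= fuel ->
  exists rest, path_nodes G v (follow table fuel (nm v)) = Some (v :: rest) /\
    NoDup (v :: rest) /\ last (v :: rest) v = 0 /\ length rest = k /\
    forall x, In x (v :: rest) -> x < n /\ dist x <= k.
Proof.
  induction k; intros fuel v Hv Hd Hf.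
  - pose proof (dist_zero v Hv Hd). subst v. exists [].
    assert (follow table fuel (nm 0) = []).
    { destruct fuel; simpl; auto. rewrite lookup_spec by lia. auto. }
    rewrite H. simpl. split; auto. split; [constructor; auto; constructor|]. split; auto. split; auto.
    intros x [<-|[]]. lia.
  - assert (Hv0 : v <> 0) by (intro; subst; rewrite dist0 in Hd; lia).
    destruct fuel as [|f]; [lia|].
    destruct (Hpar v Hv Hv0) as [Hp1 [Hp2 [Hp3 Hp4]]].
    destruct (IHk f (par v) Hp1 ltac:(lia) ltac:(lia)) as [rest [R1 [R2 [R3 [R4 R5]]]]].
    exists (par v :: rest).
    assert (E : follow table (S f) (nm v) = pp v :: rport G v (pp v) :: follow table f (nm (par v))).
    { simpl. rewrite lookup_spec by auto. destruct (Nat.eqb_spec v 0); [congruence|]. reflexivity. }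
    rewrite E. simpl.
    assert (Hc : (pp v <? deg G v) && (rport G v (pp v) =? rport G v (pp v)) = true).
    { apply andb_true_intro. split; [apply Nat.ltb_lt; auto|apply Nat.eqb_refl]. }
    rewrite Hc, Hp3, R1. split; auto. split; [|split; [|split]].
    + constructor; auto. intro Hin. destruct (R5 v Hin). lia.
    + change (last (par v :: rest) v = 0). rewrite (last_cons_irrel (par v) rest v (par v)). exact R3.
    + simpl. lia.
    + intros x [<-|Hx]; [split; lia|]. destruct (R5 x Hx). split; lia.
Qed.

Lemma dist_lt v : v < n -> dist v < n.
Proof.
  intros Hv. destruct (follow_path (dist v) (dist v) v Hv eq_refl (le_n _)) as [rest [_ [ND [_ [Hl Hin]]]]].
  assert (incl (v :: rest) (seq 0 n)).
  { intros x Hx. apply in_seq. destruct (Hin x Hx). lia. }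
  pose proof (NoDup_incl_length ND H). simpl in H0. rewrite length_seq in H0. lia.
Qed.
End Tree.


Fixpoint encP (p : positive) : list bool :=
  match p with
  | xI p' => true :: true :: encP p'
  | xO p' => true :: false :: encP p'
  | xH => [false]
  end.

Fixpoint decP (bs : list bool) : positive * list bool :=
  match bs with
  | true :: b :: rest => let (p, r) := decP rest in ((if b then xI p else xO p), r)
  | false :: rest => (xH, rest)
  | [true] => (xH, [])
  | [] => (xH, [])
  end.

Lemma decP_encP p r : decP (encP p ++ r) = (p, r).
Proof. induction p; simpl; try rewrite IHp; auto. Qed.

Lemma encP_len p : length (encP p) = 2 * Nat.log2 (Pos.to_nat p) + 1.
Proof.
  induction p; simpl length; rewrite ?IHp.
  - rewrite Pos2Nat.inj_xI. pose proof (Pos2Nat.is_pos p).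
    replace (S (2 * Pos.to_nat p)) with (2 * Pos.to_nat p + 1) by lia.
    rewrite Nat.log2_succ_double by lia. lia.
  - rewrite Pos2Nat.inj_xO. pose proof (Pos2Nat.is_pos p). rewrite Nat.log2_double by lia. lia.
  - reflexivity.
Qed.

Definition encN (k : nat) := encP (Pos.of_succ_nat k).
Definition decN (bs : list bool) : nat * list bool := let (p, r) := decP bs in (Pos.to_nat p - 1, r).

Lemma decN_encN k r : decN (encN k ++ r) = (k, r).
Proof. unfold decN, encN. rewrite decP_encP, SuccNat2Pos.id_succ. f_equal. lia. Qed.

Lemma encN_len k : length (encN k) = 2 * Nat.log2 (S k) + 1.
Proof. unfold encN. rewrite encP_len, SuccNat2Pos.id_succ. auto. Qed.

Fixpoint decAll (fuel : nat) (bs : list bool) : list nat :=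
  match fuel with
  | O => []
  | S f => match bs with
           | [] => []
           | _ :: _ => let (k, r) := decN bs in k :: decAll f r
           end
  end.

Lemma decAll_enc l : forall fuel, length (flat_map encN l) <= fuel -> decAll fuel (flat_map encN l) = l.
Proof.
  induction l as [|a l IH]; intros fuel Hf.
  - destruct fuel; auto.
  - simpl flat_map in *. rewrite length_app, encN_len in Hf.
    destruct fuel as [|f]; [lia|].
    assert (Hc : exists b t, encN a ++ flat_map encN l = b :: t).
    { destruct (encN a) eqn:E. { pose proof (encN_len a). rewrite E in H. simpl in H. lia. }
      simpl. eauto. }
    destruct Hc as [b [t Ht]]. simpl. rewrite Ht. rewrite <- Ht. rewrite decN_encN.
    rewrite IH by lia. auto.
Qed.

Lemma enc_len_bound M l : Forall (fun k => k <= M) l ->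
  length (flat_map encN l) <= length l * (2 * Nat.log2 (S M) + 1).
Proof.
  induction 1; simpl; auto. rewrite length_app, encN_len.
  assert (Nat.log2 (S x) <= Nat.log2 (S M)) by (apply Nat.log2_le_mono; lia). lia.
Qed.

Definition flat6 (r : rule) : list nat := let '(a, b, c, d, e, f) := r in [a; b; c; d; e; f].
Fixpoint unflat6 (l : list nat) : list rule :=
  match l with
  | a :: b :: c :: d :: e :: f :: rest => (a, b, c, d, e, f) :: unflat6 rest
  | _ => []
  end.
Definition flat4 (t : tentry) : list nat := let '(a, b, c, d) := t in [a; b; c; d].
Fixpoint unflat4 (l : list nat) : list tentry :=
  match l with
  | a :: b :: c :: d :: rest => (a, b, c, d) :: unflat4 rest
  | _ => []
  end.

Lemma unflat6_flat rs : unflat6 (flat_map flat6 rs) = rs.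
Proof. induction rs as [|[[[[[a b] c] d] e] f] rs IH]; simpl; auto. rewrite IH. auto. Qed.
Lemma unflat4_flat ts : unflat4 (flat_map flat4 ts) = ts.
Proof. induction ts as [|[[[a b] c] d] ts IH]; simpl; auto. rewrite IH. auto. Qed.
Lemma flat6_len rs : length (flat_map flat6 rs) = 6 * length rs.
Proof. induction rs as [|[[[[[a b] c] d] e] f] rs IH]; simpl; auto. rewrite IH. lia. Qed.
Lemma flat4_len ts : length (flat_map flat4 ts) = 4 * length ts.
Proof. induction ts as [|[[[a b] c] d] ts IH]; simpl; auto. rewrite IH. lia. Qed.

Definition parse (l : list nat) : nat * nat * list rule * list tentry :=
  match l with
  | n0 :: ph :: R :: rest => (n0, ph, unflat6 (firstn (6 * R) rest), unflat4 (skipn (6 * R) rest))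
  | _ => (0, 0, [], [])
  end.

Definition mklist (n0 ph : nat) (rs : list rule) (T : list tentry) : list nat :=
  n0 :: ph :: length rs :: flat_map flat6 rs ++ flat_map flat4 T.

Lemma parse_mk n0 ph rs T : parse (mklist n0 ph rs T) = (n0, ph, rs, T).
Proof.
  unfold parse, mklist. rewrite <- flat6_len.
  rewrite <- (Nat.add_0_r (length (flat_map flat6 rs))) at 1.
  rewrite firstn_app_2. simpl firstn. rewrite app_nil_r, unflat6_flat.
  rewrite skipn_app, skipn_all, Nat.sub_diag. simpl. rewrite unflat4_flat. auto.
Qed.

Definition A : algorithm := fun adv V =>
  let '(n0, ph, rs, T) := parse (decAll (length adv) adv) in
  if Nat.eqb (height V) ph then Some (follow T n0 (nameV rs ph V)) else None.

Lemma height_bview G : wf_graph G -> forall r v, v < pg_n G -> height (bview G r v) = r.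
Proof.
  intros W r. induction r; intros v Hv; auto.
  simpl. pose proof (deg_pos G W v Hv).
  destruct (deg G v) as [|d] eqn:E; [lia|]. simpl.
  rewrite IHr; auto. apply (wf_nbr G W v 0 Hv). lia.
Qed.

Lemma log2_INR n : 0 < n -> (INR (Nat.log2 n) <= log2 (INR n))%R.
Proof.
  intros Hn. unfold log2.
  assert (Hl2 : (0 < ln 2)%R) by (rewrite <- ln_1; apply ln_increasing; lra).
  apply (Rmult_le_reg_r (ln 2)); auto. unfold Rdiv. rewrite Rmult_assoc, Rinv_l, Rmult_1_r by lra.
  rewrite <- ln_pow by lra.
  destruct (Nat.log2_spec n Hn) as [H1 _].
  apply le_INR in H1. rewrite pow_INR in H1. simpl INR in H1.
  replace (1 + 1)%R with 2%R in H1 by ring.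
  destruct (Rle_lt_or_eq_dec _ _ H1) as [H|H].
  - left. apply ln_increasing; auto. apply pow_lt. lra.
  - rewrite H. lra.
Qed.


Lemma core G phi : wf_graph G -> election_index G phi ->
  exists adv, elects_in A adv G phi /\ length adv <= 100 * pg_n G * Nat.log2 (pg_n G).
Proof.
  intros W Hphi. set (n := pg_n G).
  assert (Hn3 : 3 <= n) by (destruct W; auto).
  destruct (outer G W phi Hphi phi (le_n _)) as [rs [F [Hlen [Hc [Hb Hi]]]]].
  change (pg_n G) with n in Hc, Hb, Hi. pose proof (cnt_le n (gname G rs phi)) as HcL.
  set (nm := gname G rs phi).
  assert (Hnm : forall u w, u < n -> w < n -> nm u = nm w -> u = w).
  { intros u w Hu Hw E. apply Hi in E; auto. destruct (Nat.eq_dec u w); auto.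
    exfalso. destruct Hphi as [Hd _]. apply (Hd u w Hu Hw n0 E). }
  destruct (choice_fun (fun v d => v < n -> reachn G 0 d v /\ forall j, reachn G 0 j v -> d <= j))
    as [dist Hdist].
  { intros v. destruct (classic (v < n)) as [Hv|Hv]; [|exists 0; intro; contradiction].
    destruct W as [_ [_ [_ Hconn]]].
    destruct (reach_reachn G 0 v (Hconn 0 v ltac:(lia) Hv)) as [k Hk].
    destruct (min_exists (fun k => reachn G 0 k v) (ex_intro _ k Hk)) as [d [Hd1 Hd2]].
    exists d. auto. }
  destruct (choice_fun (fun v (wp : nat * nat) => v < n -> v <> 0 ->
      fst wp < n /\ snd wp < deg G v /\ nbr G v (snd wp) = fst wp /\ S (dist (fst wp)) = dist v))
    as [f Hf].
  { intros v. destruct (classic (v < n /\ v <> 0)) as [[Hv Hv0]|Hv].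
    - destruct (parent_exists G W dist Hdist v Hv Hv0) as [w [p H]]. exists (w, p). auto.
    - exists (0, 0). intros. tauto. }
  set (par := fun v => fst (f v)). set (pp := fun v => snd (f v)).
  assert (Hpar : forall v, v < n -> v <> 0 ->
     par v < n /\ pp v < deg G v /\ nbr G v (pp v) = par v /\ S (dist (par v)) = dist v).
  { intros v Hv Hv0. apply Hf; auto. }
  set (T := table G par pp nm).
  set (lst := mklist n phi rs T).
  exists (flat_map encN lst).
  assert (Hdec : decAll (length (flat_map encN lst)) (flat_map encN lst) = lst).
  { apply decAll_enc. lia. }
  split.
  - exists 0. split; [lia|]. intros v Hv. exists phi, (follow T n (nm v)).
    assert (HA : forall r, A (flat_map encN lst) (bview G r v) =
              if Nat.eqb r phi then Some (follow T n (nameV rs phi (bview G r v))) else None).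
    { intros r. unfold A. rewrite Hdec. unfold lst. rewrite parse_mk.
      rewrite height_bview by auto. reflexivity. }
    split; [lia|]. split; [|split].
    + intros r' Hr'. rewrite HA. destruct (Nat.eqb_spec r' phi); [lia|auto].
    + rewrite HA, Nat.eqb_refl. rewrite nameV_bview by lia. reflexivity.
    + pose proof (dist_lt G W dist Hdist par pp Hpar nm Hnm v Hv) as Hdl.
      destruct (follow_path G W dist Hdist par pp Hpar nm Hnm (dist v) n v Hv eq_refl ltac:(lia))
        as [rest [P1 [P2 [P3 _]]]].
      exists (v :: rest). split; auto.
  - assert (HR : length rs <= n) by (idtac; lia).
    assert (HF : Forall (fun k => k <= 2 * n) lst).
    { apply Forall_forall. intros x Hx. unfold lst, mklist in Hx.
      destruct Hx as [<-|[<-|[<-|Hx]]]; [lia|lia|lia|].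
      apply in_app_iff in Hx. destruct Hx as [Hx|Hx]; apply in_flat_map in Hx; destruct Hx as [e [He Hx]].
      - rewrite Forall_forall in F. destruct (F e He) as [F1 F2].
        destruct e as [[[[[a b] c] d] g] h]. simpl in F1, F2. simpl in Hx.
        destruct Hx as [<-|[<-|[<-|[<-|[<-|[<-|[]]]]]]]; lia.
      - unfold T, table in He. apply in_map_iff in He. destruct He as [v [<- Hv]].
        apply in_seq in Hv. simpl in Hx.
        destruct (Hpar v ltac:(lia) ltac:(lia)) as [Q1 [Q2 [Q3 _]]].
        destruct (wf_nbr G W v (pp v) ltac:(lia) Q2) as [_ [Q5 _]].
        pose proof (deg_lt G W v ltac:(lia)).
        pose proof (deg_lt G W (nbr G v (pp v)) ltac:(apply wf_nbr; auto; lia)).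
        pose proof (Hb v ltac:(lia)). pose proof (Hb (par v) Q1).
        destruct Hx as [<-|[<-|[<-|[<-|[]]]]]; unfold nm in *; lia. }
    pose proof (enc_len_bound _ _ HF) as HL.
    assert (Hlst : length lst = 3 + 6 * length rs + 4 * (n - 1)).
    { unfold lst, mklist. simpl. rewrite length_app, flat6_len, flat4_len. unfold T, table.
      rewrite length_map, length_seq. lia. }
    rewrite Hlst in HL.
    assert (Hlog1 : 1 <= Nat.log2 n).
    { apply Nat.log2_le_pow2; simpl; lia. }
    assert (Hlog2 : Nat.log2 (S (2 * n)) <= S (S (Nat.log2 n))).
    { transitivity (Nat.log2 (2 * (2 * n))); [apply Nat.log2_le_mono; lia|].
      rewrite !Nat.log2_double by lia. lia. }
    assert (H1 : 3 + 6 * length rs + 4 * (n - 1) <= 11 * n) by lia.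
    assert (H2 : 2 * Nat.log2 (S (2 * n)) + 1 <= 7 * Nat.log2 n) by lia.
    pose proof (Nat.mul_le_mono _ _ _ _ H1 H2). fold n. nia.
Qed.

Lemma elect_unique G p1 p2 : election_index G p1 -> election_index G p2 -> p1 = p2.
Proof.
  intros [A1 B1] [A2 B2]. destruct (Nat.lt_total p1 p2) as [H|[H|H]]; auto.
  - exfalso. apply (B2 p1 H A1).
  - exfalso. apply (B1 p2 H A2).
Qed.

Definition good (G : pgraph) (adv : list bool) : Prop :=
  forall phi, election_index G phi ->
    elects_in A adv G phi /\
    (INR (length adv) <= 100 * INR (pg_n G) * log2 (INR (pg_n G)))%R.

Definition Adv (G : pgraph) : list bool :=
  match excluded_middle_informative (exists adv, good G adv) with
  | left H => proj1_sig (constructive_indefinite_description _ H)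
  | right _ => []
  end.

Theorem theorem1 :
  exists (C : R) (A : algorithm) (Adv : pgraph -> list bool),
    (0 < C)%R /\
    forall (G : pgraph) (phi : nat),
      wf_graph G -> feasible G -> election_index G phi ->
      (INR (length (Adv G)) <= C * INR (pg_n G) * log2 (INR (pg_n G)))%R /\
      elects_in A (Adv G) G phi.
Proof.
  exists 100%R, A, Adv. split; [lra|].
  intros G phi W _ Hphi.
  assert (Hex : exists adv, good G adv).
  { destruct (core G phi W Hphi) as [adv [H1 H2]]. exists adv. intros phi' Hphi'.
    rewrite <- (elect_unique G phi phi' Hphi Hphi'). split; auto.
    assert (Hn : 0 < pg_n G) by (destruct W; lia).
    apply le_INR in H2. rewrite !mult_INR in H2.
    pose proof (log2_INR (pg_n G) Hn).
    assert (0 <= INR (pg_n G))%R by apply pos_INR.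
    replace (INR 100) with 100%R in H2 by (simpl; lra).
    eapply Rle_trans; [exact H2|].
    apply Rmult_le_compat_l; [nra|auto]. }
  unfold Adv. destruct (excluded_middle_informative (exists adv, good G adv)) as [H|H]; [|contradiction].
  destruct (proj2_sig (constructive_indefinite_description _ H) phi Hphi). split; auto.
Qed.
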